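(* Let $\mathcal{F}$ be a family of objects such that any subset of $n$ objects from $\mathcal{F}$ admits a unimax coloring with $\gamma_{\mathrm{um}}(n)$ colors, where $\gamma_{\mathrm{um}}$ is non-decreasing. Then one can maintain a conflict-free coloring of a set $S$ of objects from $\mathcal{F}$ under insertions such that the number of used colors is $O(\gamma_{\mathrm{um}}(n)\log^2 n)$ and the number of recolorings per insertion is at most $\lceil\log n\rceil$, where $n$ is the current number of objects in $S$.
   Context: The setting is abstract: either objects are regions in the plane and colorings are considered with respect to points, or objects are points and colorings are considered with respect to a fixed family of ranges. For a point (resp. range) $q$, let $S_q$ be the set of objects of $S$ in relation with $q$ (regions containing $q$, resp. points contained in $q$). A coloring of $S$ is conflict-free if for every $q$ with $S_q\neq\emptyset$ some object of $S_q$ has a color unique within $S_q$; it is unimax if, with colors being integers, the maximum color in $S_q$ is attained by exactly one object of $S_q$ whenever $S_q\ne\emptyset$. The number of recolorings of an insertion is the number of previously present objects whose color changes. *)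

(* Defs.v *)
(* Abstract setting: objects of type O (an eqType),
   "witnesses" q of type Q (points, resp. ranges), and a relation
   rel q o meaning "o is in relation with q". *)
From mathcomp Require Import all_boot.
Set Implicit Arguments. Unset Strict Implicit. Unset Printing Implicit Defensive.

Definition num_colors (O : eqType) (col : O -> nat) (S : seq O) : nat :=
  size (undup (map col S)).

Definition conflict_free (O : eqType) (Q : Type) (rel : Q -> O -> bool)
    (S : seq O) (col : O -> nat) : Prop :=
  forall q : Q, has (rel q) S ->
    exists2 o, (o \in S) && rel q o &
      forall o', o' \in S -> rel q o' -> o' != o -> col o' != col o.

Definition unimax (O : eqType) (Q : Type) (rel : Q -> O -> bool)
    (S : seq O) (col : O -> nat) : Prop :=
  forall q : Q, has (rel q) S ->
    exists2 o, (o \in S) && rel q o &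
      forall o', o' \in S -> rel q o' -> o' != o -> col o' < col o.

Definition num_recolorings (O : eqType) (S : seq O) (col_old col_new : O -> nat) : nat :=
  count (fun o => col_new o != col_old o) S.

(* Main.v *)
Require Import Defs.
From mathcomp Require Import all_boot zify.
From Stdlib Require Import ClassicalEpsilon.
Set Implicit Arguments. Unset Strict Implicit.

Definition blk {O : eqType} (u : seq O) (j b : nat) : seq O :=
  take (2 ^ j) (drop (b * 2 ^ j) u).
Definition bef {O : eqType} (c : O -> nat) (B : seq O) (x y : O) : bool :=
  (c y < c x) || ((c x == c y) && (index x B < index y B)).
Definition rnk {O : eqType} (g : seq O -> O -> nat) (B : seq O) (o : O) : nat :=
  count (fun z => bef (g B) B z o) B.
Definition st {O : eqType} (g : seq O -> O -> nat) (u : seq O) (j : nat) (o : O) : nat :=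
  (index o u %/ 2 ^ j).+1 * 2 ^ j + rnk g (blk u j (index o u %/ 2 ^ j)) o.
Fixpoint levA {O : eqType} (g : seq O -> O -> nat) (u : seq O) (n : nat) (o : O) (m : nat) : nat :=
  match m with 0 => 0 | m'.+1 => if st g u m' o <= n then m' else levA g u n o m' end.
Definition lev {O : eqType} (g : seq O -> O -> nat) (u : seq O) (n : nat) (o : O) : nat :=
  levA g u n o n.
Definition off (gam : nat -> nat) (j : nat) : nat := \sum_(i < j) 4 * gam (2 ^ i).
Definition colj {O : eqType} (gam : nat -> nat) (g : seq O -> O -> nat) (u : seq O) (j : nat) (o : O) : nat :=
  let b := index o u %/ 2 ^ j in let B := blk u j b in
  off gam j + 4 * index (g B o) (undup (map (g B) B)) + b %% 4.
Definition colr {O : eqType} (gam : nat -> nat) (g : seq O -> O -> nat) (u : seq O) (n : nat) (o : O) : nat :=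
  colj gam g u (lev g u n o) o.

Lemma pow_gt0 j : 0 < 2 ^ j. Proof. by rewrite expn_gt0. Qed.

Lemma blk_take {O : eqType} (s : seq O) n j b :
  b.+1 * 2 ^ j <= n -> blk (take n s) j b = blk s j b.
Proof.
move=> h; rewrite /blk !take_drop take_takel //; rewrite mulSn in h; lia.
Qed.

Lemma index_take_mem {O : eqType} (s : seq O) n o :
  index o s < n -> index o (take n s) = index o s.
Proof.
move=> h; case: (boolP (o \in s)) => hs.
  have ht : o \in take n s by rewrite in_take.
  by rewrite -{2}(cat_take_drop n s) index_cat ht.
rewrite take_oversize //; move: h; rewrite memNindex //; lia.
Qed.

Lemma mem_blk {O : eqType} (s : seq O) j o :
  o \in s -> o \in blk s j (index o s %/ 2 ^ j).
Proof.
move=> hs; set i := index o s.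
have hi : i < size s by rewrite index_mem.
set b := i %/ 2 ^ j.
have p := pow_gt0 j.
have ei : i = b * 2 ^ j + i %% 2 ^ j by rewrite {1}(divn_eq i (2 ^ j)).
have hm : i %% 2 ^ j < 2 ^ j by rewrite ltn_pmod.
have <- : nth o (take (2 ^ j) (drop (b * 2 ^ j) s)) (i %% 2 ^ j) = o.
  by rewrite nth_take // nth_drop -ei nth_index.
apply: mem_nth; rewrite size_take size_drop; case: ifP; lia.
Qed.

Lemma blk_index {O : eqType} (s : seq O) j b o : uniq s -> o \in blk s j b ->
  index o s = b * 2 ^ j + index o (blk s j b) /\ index o (blk s j b) < 2 ^ j.
Proof.
move=> us hb; set B := blk s j b.
have hi : index o B < size B by rewrite index_mem.
have hsz : size B <= 2 ^ j /\ size B <= size s - b * 2 ^ j.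
  rewrite /B /blk size_take size_drop; case: ifP; lia.
have eo : o = nth o s (b * 2 ^ j + index o B).
  by rewrite -nth_drop -(nth_take _ (n0 := 2 ^ j)); [rewrite nth_index | lia].
split; last lia.
by rewrite {1}eo index_uniq //; lia.
Qed.

Lemma blk_div {O : eqType} (s : seq O) j b o : uniq s -> o \in blk s j b ->
  index o s %/ 2 ^ j = b.
Proof.
move=> us hb; have [-> h] := blk_index us hb.
by rewrite divnMDl ?pow_gt0 // divn_small // addn0.
Qed.

Lemma blk_lt {O : eqType} (s : seq O) j b o : uniq s -> o \in blk s j b ->
  index o s < b.+1 * 2 ^ j.
Proof. move=> us hb; have [-> h] := blk_index us hb; rewrite mulSn; lia. Qed.

Lemma blk_mem {O : eqType} (s : seq O) j b o : o \in blk s j b -> o \in s.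
Proof. by move/mem_take/mem_drop. Qed.

Lemma blk_uniq {O : eqType} (s : seq O) j b : uniq s -> uniq (blk s j b).
Proof. by move=> us; rewrite take_uniq // drop_uniq. Qed.

Lemma blk_all {O : eqType} (F : pred O) (s : seq O) j b : all F s -> all F (blk s j b).
Proof. by move=> /allP h; apply/allP => x /blk_mem /h. Qed.

Lemma blk_size {O : eqType} (s : seq O) j b : b.+1 * 2 ^ j <= size s ->
  size (blk s j b) = 2 ^ j.
Proof. rewrite /blk size_take size_drop mulSn; case: ifP; lia. Qed.

Lemma blk_size_le {O : eqType} (s : seq O) j b : size (blk s j b) <= 2 ^ j.
Proof. rewrite /blk size_take; case: ifP; lia. Qed.

Lemma bef_irr {O : eqType} c (B : seq O) x : bef c B x x = false.
Proof. rewrite /bef; lia. Qed.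

Lemma bef_trans {O : eqType} c (B : seq O) x y z :
  bef c B z x -> bef c B x y -> bef c B z y.
Proof. rewrite /bef; lia. Qed.

Lemma bef_total {O : eqType} c (B : seq O) x y : x \in B -> y \in B -> x != y ->
  bef c B x y || bef c B y x.
Proof.
move=> hx hy hne.
have : index x B != index y B.
  apply: contra hne => /eqP e.
  by rewrite -(nth_index x hx) e nth_index.
rewrite /bef; lia.
Qed.

Lemma count_le {T : Type} (P Q : pred T) (s : seq T) :
  (forall z, P z -> Q z) -> count P s <= count Q s.
Proof.
move=> h; elim: s => //= a s IH.
have : P a <= Q a by case: (P a) (h a) => // ->.
lia.
Qed.

Lemma count_lt {T : eqType} (P Q : pred T) (s : seq T) x :
  (forall z, P z -> Q z) -> x \in s -> Q x -> ~~ P x -> count P s < count Q s.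
Proof.
move=> h; elim: s => //= a s IH.
have hle : P a <= Q a by case: (P a) (h a) => // ->.
rewrite in_cons => /orP [/eqP -> | hx] hq hp.
  have := count_le s h; move: hq hp; case: (P x); case: (Q x) => //=; lia.
have := IH hx hq hp; lia.
Qed.

Lemma rnk_lt {O : eqType} g (B : seq O) x y : x \in B -> bef (g B) B x y ->
  rnk g B x < rnk g B y.
Proof.
move=> hx hb; apply: (count_lt (x := x)) => //.
  by move=> z hz; apply: bef_trans hz hb.
by rewrite bef_irr.
Qed.

Lemma rnk_ltsize {O : eqType} g (B : seq O) o : o \in B -> rnk g B o < size B.
Proof.
move=> ho; rewrite -count_predT; apply: (count_lt (x := o)) => //.
by rewrite bef_irr.
Qed.

Lemma rnk_inj {O : eqType} g (B : seq O) x y : x \in B -> y \in B ->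
  rnk g B x = rnk g B y -> x = y.
Proof.
move=> hx hy e; apply/eqP; apply/negPn/negP => hne.
case/orP: (bef_total (g B) hx hy hne) => h.
  by have := rnk_lt hx h; lia.
by have := rnk_lt hy h; lia.
Qed.

Lemma st_ge {O : eqType} g (u : seq O) j o : (index o u %/ 2 ^ j).+1 * 2 ^ j <= st g u j o.
Proof. exact: leq_addr. Qed.

Lemma st_lt {O : eqType} g (u : seq O) j o : o \in u ->
  st g u j o < (index o u %/ 2 ^ j).+2 * 2 ^ j.
Proof.
move=> hu; rewrite /st.
have h1 := rnk_ltsize g (mem_blk j hu).
have h2 := blk_size_le u j (index o u %/ 2 ^ j).
rewrite [_.+2 * _]mulSn; lia.
Qed.

Lemma st_pow {O : eqType} g (u : seq O) j o : 2 ^ j <= st g u j o.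
Proof. apply: leq_trans (st_ge _ _ _ _); rewrite mulSn; exact: leq_addr. Qed.

Lemma st_bound {O : eqType} g (u : seq O) j o n : st g u j o <= n -> j < n.
Proof.
move=> h; apply: leq_trans h; apply: leq_trans (st_pow _ _ _ _).
exact: ltn_expl.
Qed.

Lemma st0 {O : eqType} g (u : seq O) o : o \in u -> st g u 0 o = (index o u).+1.
Proof.
move=> hu; have h1 := rnk_ltsize g (mem_blk 0 hu).
have h2 := blk_size_le u 0 (index o u %/ 2 ^ 0).
rewrite /st expn0 divn1 in h1 h2 *.
lia.
Qed.

Lemma st_inj {O : eqType} g (u : seq O) j o o' : uniq u -> o \in u -> o' \in u ->
  st g u j o = st g u j o' -> o = o'.
Proof.
move=> uu ho ho' e.
have a1 := st_ge g u j o; have a2 := st_lt g j ho.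
have a3 := st_ge g u j o'; have a4 := st_lt g j ho'.
have p := pow_gt0 j.
have eb : index o u %/ 2 ^ j = index o' u %/ 2 ^ j.
  have b1 : (index o u %/ 2 ^ j).+1 < (index o' u %/ 2 ^ j).+2.
    rewrite -(ltn_pmul2r p); lia.
  have b2 : (index o' u %/ 2 ^ j).+1 < (index o u %/ 2 ^ j).+2.
    rewrite -(ltn_pmul2r p); lia.
  lia.
move: e; rewrite /st eb => e.
have e2 : rnk g (blk u j (index o' u %/ 2 ^ j)) o = rnk g (blk u j (index o' u %/ 2 ^ j)) o'.
  lia.
apply: rnk_inj e2; last exact: mem_blk.
by rewrite -eb; apply: mem_blk.
Qed.

Lemma st_take_eq {O : eqType} g (s : seq O) n j o : index o s < n ->
  (index o s %/ 2 ^ j).+1 * 2 ^ j <= n -> st g (take n s) j o = st g s j o.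
Proof. by move=> h1 h2; rewrite /st index_take_mem // blk_take. Qed.

Lemma st_prefix {O : eqType} g (s : seq O) n j o : index o s < n ->
  (st g (take n s) j o <= n) = (st g s j o <= n).
Proof.
move=> h; case: (leqP ((index o s %/ 2 ^ j).+1 * 2 ^ j) n) => h2.
  by rewrite st_take_eq.
have g1 := st_ge g (take n s) j o; have g2 := st_ge g s j o.
rewrite index_take_mem // in g1.
apply/idP/idP => h3; lia.
Qed.

Lemma levA_max {O : eqType} g (u : seq O) n o m j : j < m -> st g u j o <= n ->
  j <= levA g u n o m.
Proof.
elim: m => // m IH hj hs /=; case: ifP => h.
  lia.
have : j != m by apply: contraFneq h => <-.
move=> hne; apply: IH => //; lia.
Qed.

Lemma levA_st {O : eqType} g (u : seq O) n o m : st g u 0 o <= n ->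
  st g u (levA g u n o m) o <= n.
Proof. move=> h0; elim: m => //= m IH; by case: ifP. Qed.

Lemma levA_ext {O : eqType} g (u1 u2 : seq O) n o1 o2 :
  (forall j, (st g u1 j o1 <= n) = (st g u2 j o2 <= n)) ->
  forall m, levA g u1 n o1 m = levA g u2 n o2 m.
Proof. move=> h; elim=> //= m IH; by rewrite h IH. Qed.

Lemma lev_prefix {O : eqType} g (s : seq O) n o : index o s < n ->
  lev g (take n s) n o = lev g s n o.
Proof. move=> h; apply: levA_ext => j; exact: st_prefix. Qed.

Lemma lev_st {O : eqType} g (s : seq O) n o : o \in s -> index o s < n ->
  st g s (lev g s n o) o <= n.
Proof. move=> hs h; apply: levA_st; by rewrite st0. Qed.

Lemma lev_compl {O : eqType} g (s : seq O) n o : o \in s -> index o s < n ->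
  (index o s %/ 2 ^ lev g s n o).+1 * 2 ^ lev g s n o <= n.
Proof. move=> hs h; exact: leq_trans (st_ge _ _ _ _) (lev_st g hs h). Qed.

Lemma colr_prefix {O : eqType} gam g (s : seq O) n o : o \in s -> index o s < n ->
  colr gam g (take n s) n o = colr gam g s n o.
Proof.
move=> hs h; rewrite /colr /colj lev_prefix // index_take_mem // blk_take //.
exact: lev_compl.
Qed.

Lemma off_S gam j : off gam j.+1 = off gam j + 4 * gam (2 ^ j).
Proof. by rewrite /off big_ord_recr. Qed.

Lemma off_mono gam i j : i <= j -> off gam i <= off gam j.
Proof.
move=> h; rewrite -(subnKC h); elim: (j - i) => [|d IH]; first by rewrite addn0.
by rewrite addnS off_S; apply: leq_trans IH (leq_addr _ _).
Qed.

Lemma colj_bound {O : eqType} (F : pred O) gam g (s : seq O) j o :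
  (forall S, uniq S -> all F S -> num_colors (g S) S <= gam (size S)) ->
  uniq s -> all F s -> o \in s -> (index o s %/ 2 ^ j).+1 * 2 ^ j <= size s ->
  off gam j <= colj gam g s j o < off gam j.+1.
Proof.
move=> Hg us Fs hs hc; rewrite off_S /colj.
set b := index o s %/ 2 ^ j; set B := blk s j b.
have h1 : index (g B o) (undup (map (g B) B)) < gam (2 ^ j).
  rewrite -(blk_size hc); apply: leq_trans (Hg _ (blk_uniq j b us) (blk_all j b Fs)).
  by rewrite /num_colors index_mem mem_undup map_f // mem_blk.
have h2 : b %% 4 < 4 by rewrite ltn_mod.
lia.
Qed.

Lemma lev_window {O : eqType} g (s : seq O) n o : o \in s -> index o s < n ->
  n < (index o s %/ 2 ^ lev g s n o + 4) * 2 ^ lev g s n o.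
Proof.
move=> hs h; set j := lev g s n o.
have hn : n < st g s j.+1 o.
  rewrite ltnNge; apply/negP => hst.
  have := levA_max (st_bound hst) hst; rewrite -/(lev g s n o) -/j; lia.
apply: (leq_trans hn); apply: leq_trans (ltnW (st_lt g j.+1 hs)) _.
rewrite expnSr divnMA.
set b := index o s %/ 2 ^ j.
rewrite [2 ^ j * 2]mulnC mulnA leq_mul2r; apply/orP; right; lia.
Qed.

Lemma ar_window b b' P n : 0 < P -> b.+1 * P <= n -> n < (b' + 4) * P ->
  b'.+1 * P <= n -> n < (b + 4) * P -> b %% 4 = b' %% 4 -> b = b'.
Proof.
move=> p h1 h2 h3 h4 hm.
have e1 : b.+1 < b' + 4 by rewrite -(ltn_pmul2r p); exact: leq_ltn_trans h1 h2.
have e2 : b'.+1 < b + 4 by rewrite -(ltn_pmul2r p); exact: leq_ltn_trans h3 h4.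
lia.
Qed.

Lemma ar_dec4 a x y c d : a + 4 * x + c = a + 4 * y + d -> c < 4 -> d < 4 -> x = y /\ c = d.
Proof. lia. Qed.

Lemma ar_pred a k : a < k -> a <= k.-1.
Proof. lia. Qed.

Lemma ar_predlt a k : a < k.-1 -> a < k.
Proof. lia. Qed.

Lemma lev_lt {O : eqType} g (s : seq O) n o : o \in s -> index o s < n ->
  lev g s n o < n.
Proof. move=> hs h; exact: st_bound (lev_st g hs h). Qed.

Unset Implicit Arguments.

Theorem mainTheorem7 (O : eqType) (Q : Type) (rel : Q -> O -> bool)
    (F : pred O) (gamma : nat -> nat) :
  {homo gamma : m n / m <= n} ->
  (forall S : seq O, uniq S -> all F S ->
     exists col : O -> nat,
       unimax rel S col /\ num_colors col S <= gamma (size S)) ->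
  exists C : nat, exists A : seq O -> (O -> nat),
    forall s : seq O, uniq s -> all F s ->
    forall k, 1 <= k <= size s ->
      [/\ conflict_free rel (take k s) (A (take k s)),
          num_colors (A (take k s)) (take k s)
            <= C * gamma k * (up_log 2 k).+1 ^ 2
        & num_recolorings (take k.-1 s) (A (take k.-1 s)) (A (take k s))
            <= up_log 2 k].
Proof.
move=> Hmono H.
have [g Hg] : exists g : seq O -> O -> nat, forall S, uniq S -> all F S ->
    unimax rel S (g S) /\ num_colors (g S) S <= gamma (size S).
  exists (fun S => epsilon (inhabits (fun _ : O => 0)) (fun col =>
    uniq S -> all F S -> unimax rel S col /\ num_colors col S <= gamma (size S))).
  move=> S uS FS; apply: (epsilon_spec (inhabits (fun _ : O => 0))
    (fun col => uniq S -> all F S -> unimax rel S col /\ num_colors col S <= gamma (size S))) => //.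
  by have [col Hc] := H S uS FS; exists col.
have Hg2 : forall S, uniq S -> all F S -> num_colors (g S) S <= gamma (size S).
  by move=> S uS FS; case: (Hg S uS FS).
exists 4, (fun t => colr gamma g t (size t)).
move=> s us Fs k /andP [k1 kle].
have memt : forall n o, n <= size s -> (o \in take n s) = (o \in s) && (index o s < n).
  move=> n o hn; rewrite in_take_leq //; apply/idP/idP => [hi | /andP [] //].
  by rewrite hi andbT -index_mem; exact: leq_trans hi hn.
have Acol : forall n o, n <= size s -> o \in take n s ->
    colr gamma g (take n s) (size (take n s)) o = colr gamma g s n o.
  move=> n o hn; rewrite memt // => /andP [hs hi].
  by rewrite size_takel // colr_prefix.
split.
-
  move=> q hq.
  set L := fun o => lev g s k o.
  pose P := fun j => has (fun o => rel q o && (L o == j)) (take k s).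
  have exP : exists j, P j.
    case/hasP: hq => o ho hr; exists (L o); apply/hasP; exists o => //.
    by rewrite hr eqxx.
  have ubP : forall j, P j -> j <= k.
    move=> j /hasP [o]; rewrite memt // => /andP [hs hi] /andP [_ /eqP <-].
    exact: ltnW (lev_lt g hs hi).
  case: (ex_maxnP exP ubP) => j Pj Pmax.
  case/hasP: Pj => p0; rewrite memt // => /andP [hs0 hi0] /andP [hr0 /eqP Lp0].
  set b := index p0 s %/ 2 ^ j.
  set B := blk s j b.
  have hc : b.+1 * 2 ^ j <= k by rewrite /b -Lp0; apply: lev_compl.
  have hp0B : p0 \in B by apply: mem_blk.
  have [um _] := Hg B (blk_uniq j b us) (blk_all j b Fs).
  have hqB : has (rel q) B by apply/hasP; exists p0.
  case: (um q hqB) => m /andP [hmB hrm] hm.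
  have hms : m \in s := blk_mem hmB.
  have hmb : index m s %/ 2 ^ j = b := blk_div us hmB.
  have hmi : index m s < k by apply: leq_trans (blk_lt us hmB) hc.
  have hstm : st g s j m <= k.
    case: (eqVneq m p0) => [-> | hne].
      by rewrite -Lp0; apply: lev_st.
    have hne' : p0 != m by rewrite eq_sym.
    have hlt := hm p0 hp0B hr0 hne'.
    have hb : bef (g B) B m p0 by rewrite /bef hlt.
    have := rnk_lt hmB hb.
    have hst0 : st g s j p0 <= k by rewrite -Lp0; apply: lev_st.
    move: hst0; rewrite /st hmb -/b -/B => h1 h2; apply: leq_trans h1.
    by rewrite leq_add2l; apply: ltnW.
  have Lm : L m = j.
    apply/eqP; rewrite eqn_leq; apply/andP; split.
      apply: Pmax; apply/hasP; exists m; first by rewrite memt // hms hmi.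
      by rewrite hrm eqxx.
    exact: levA_max (st_bound hstm) hstm.
  exists m; first by rewrite memt // hms hmi hrm.
  move=> o' ho' hro' hne; apply/negP => /eqP E.
  have ho's := ho'; rewrite memt // in ho's; case/andP: ho's => hs' hi'.
  rewrite !Acol // ?memt ?hms ?hmi // /colr in E.
  have Lo'le : L o' <= j.
    apply: Pmax; apply/hasP; exists o' => //; by rewrite hro' eqxx.
  have ksz : k <= size s := kle.
  have Lo' : L o' = j.
    apply/eqP; rewrite eqn_leq Lo'le /=; rewrite leqNgt; apply/negP => hlt.
    have B1 := colj_bound Hg2 us Fs hs' (leq_trans (lev_compl g hs' hi') ksz).
    have B2 := colj_bound Hg2 us Fs hms (leq_trans (lev_compl g hms hmi) ksz).
    have := off_mono gamma hlt.
    rewrite -/(L o') -/(L m) Lm in B1 B2 E.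
    move=> hoff; case/andP: B1 => _ h1; case/andP: B2 => h2 _.
    rewrite E in h1.
    have := leq_trans (leq_trans h1 hoff) h2; by rewrite ltnn.
  rewrite -/(L o') -/(L m) Lo' Lm /colj hmb -/B in E.
  set b' := index o' s %/ 2 ^ j in E.
  have [ei hmod] := ar_dec4 E (ltn_mod _ _) (ltn_mod _ _).
  have hbb : b' = b.
    have w1 := lev_window g hs' hi'; have w2 := lev_window g hms hmi.
    have c1 := lev_compl g hs' hi'; have c2 := lev_compl g hms hmi.
    rewrite -/(L o') -/(L m) Lo' Lm hmb -/b' in w1 w2 c1 c2.
    exact: ar_window (pow_gt0 j) c1 w2 c2 w1 hmod.
  rewrite hbb -/B in ei.
  have hoB : o' \in B by rewrite /B -hbb; apply: mem_blk.
  have eg : g B o' = g B m.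
    have m1 : g B o' \in undup (map (g B) B) by rewrite mem_undup map_f.
    have m2 : g B m \in undup (map (g B) B) by rewrite mem_undup map_f.
    by rewrite -(nth_index 0 m1) ei nth_index.
  have := hm o' hoB hro' hne; by rewrite eg ltnn.
-
  rewrite /num_colors.
  set M := 4 * gamma k * (up_log 2 k).+1.
  have hv : forall v, v \in undup (map (colr gamma g (take k s) (size (take k s))) (take k s)) -> v < M.
    move=> v; rewrite mem_undup => /mapP [o ho ->].
    rewrite Acol //; move: ho; rewrite memt // => /andP [hs hi].
    set j := lev g s k o.
    have hc := lev_compl g hs hi; rewrite -/j in hc.
    have := colj_bound Hg2 us Fs hs (leq_trans hc kle); rewrite -/j => /andP [_ h1].
    rewrite /colr -/j; apply: leq_trans h1 _.
    have hpj : 2 ^ j <= k by apply: leq_trans hc; rewrite mulSn leq_addr.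
    have hoff : off gamma j.+1 <= j.+1 * (4 * gamma k).
      rewrite /off -[j.+1 in X in _ <= X * _]card_ord -sum_nat_const.
      apply: leq_sum => i _; rewrite leq_mul2l; apply/orP; right; apply: Hmono.
      apply: leq_trans hpj; rewrite leq_exp2l // -ltnS; exact: ltn_ord.
    apply: leq_trans hoff _.
    have hju : j <= up_log 2 k.
      rewrite -(leq_exp2l _ _ (isT : 1 < 2)); apply: leq_trans hpj (up_logP _ _).
      done.
    by rewrite /M [X in _ <= X]mulnC leq_mul2r ltnS hju orbT.
  apply: leq_trans (_ : M <= _).
    rewrite -(size_iota 0 M); apply: uniq_leq_size; first exact: undup_uniq.
    by move=> v hv'; rewrite mem_iota add0n hv.
  rewrite /M expnS expn1 mulnA; apply: leq_pmulr; done.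
-
  rewrite /num_recolorings.
  have kle' : k.-1 <= size s by exact: leq_trans (leq_pred k) kle.
  rewrite (@eq_in_count _ _ (fun o => colr gamma g s k o != colr gamma g s k.-1 o)); last first.
    move=> o ho /=; have ho2 := ho; rewrite memt // in ho2; case/andP: ho2 => hs hi.
    rewrite (Acol k.-1 o kle' ho) (Acol k o kle) //.
    by rewrite memt // hs ar_predlt.
  rewrite -size_filter.
  set D := filter _ _.
  have key : forall o, o \in D -> st g s (lev g s k o) o = k /\ 0 < lev g s k o /\ o \in s.
    move=> o; rewrite mem_filter memt // => /andP [hne /andP [hs hi]].
    have hik : index o s < k by exact: ar_predlt.
    set j := lev g s k o; set j' := lev g s k.-1 o.
    have hjj : j != j'.
      by apply: contraNneq hne => e; rewrite /colr -/j -/j' e.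
    have s1 := lev_st g hs hi; rewrite -/j' in s1.
    have s2 := lev_st g hs hik; rewrite -/j in s2.
    have l1 : j' <= j.
      apply: levA_max; first exact: ar_predlt (st_bound s1).
      exact: leq_trans s1 (leq_pred k).
    have sk : st g s j o = k.
      apply/eqP; rewrite eqn_leq s2 /= leqNgt; apply/negP => h.
      have h' : st g s j o <= k.-1 by exact: ar_pred.
      have := levA_max (st_bound h') h'; rewrite -/(lev g s k.-1 o) -/j' => l2.
      by move: hjj; rewrite eqn_leq l1 l2.
    split => //; split => //.
    have : j' < j by rewrite ltn_neqAle eq_sym hjj l1.
    exact: leq_ltn_trans (leq0n j').
  have uD : uniq D by rewrite filter_uniq // take_uniq.
  rewrite -(size_map (lev g s k)) -(size_iota 1 (up_log 2 k)).
  apply: uniq_leq_size.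
    rewrite map_inj_in_uniq // => o1 o2 h1 h2 e.
    have [a1 [_ c1]] := key _ h1; have [a2 [_ c2]] := key _ h2.
    apply: (st_inj (g := g) (j := lev g s k o1) us c1 c2); rewrite a1 e; by rewrite a2.
  move=> v /mapP [o ho ->]; have [a1 [b1 c1]] := key _ ho.
  rewrite mem_iota b1 /=.
  have hp := st_pow g s (lev g s k o) o; rewrite a1 in hp.
  have : lev g s k o <= up_log 2 k.
    rewrite -(leq_exp2l _ _ (isT : 1 < 2)); exact: leq_trans hp (up_logP _ _).
  by rewrite add1n ltnS.
Qed.
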